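(* Under the hypotheses of the construction below, if in addition $p>3$, then $\{M^sT^t\mathbf{1}_D\}_{s,t\in\mathbb{Z}/d\mathbb{Z}}$ is an $(a,c_1,c_2)$-projective $2$-design for $\mathbb{F}_{q^2}^d$ with $a=2$, $c_1=2d$ and $c_2=6$. Construction: $p$ prime, $k\ge1$, $r$ a prime power with $p\mid r-1$ and $r^2+r+1\mid p^k+1$; $q=p^k$, $d=r^2+r+1$; $D\subseteq\mathbb{Z}/d\mathbb{Z}$ is the Singer difference set; $\alpha$ is a primitive element of $\mathbb{F}_{q^2}^\times$, $\omega=\alpha^{(q^2-1)/d}$; $(Tf)(x)=f(x-1)$, $(Mf)(x)=\omega^xf(x)$ for $f:\mathbb{Z}/d\mathbb{Z}\to\mathbb{F}_{q^2}$.
   Context: Vectors in $\mathbb{F}_{q^2}^d$ are identified with functions $\mathbb{Z}/d\mathbb{Z}\to\mathbb{F}_{q^2}$; $\mathbf{1}_D$ is the indicator of $D$. The Singer difference set is a cyclic difference set with parameters $(r^2+r+1,r+1,1)$: $|D|=r+1$ and every nonzero element of $\mathbb{Z}/d\mathbb{Z}$ is uniquely $x-y$ with $x,y\in D$. For $a\in\mathbb{F}_{q^2}$, $\overline{a}=a^q$; $A^*$ is conjugate transpose; $\langle x,y\rangle=x^*y$ on $\mathbb{F}_{q^2}^d$ and analogously on $(\mathbb{F}_{q^2}^d)^{\otimes2}$. For a nondegenerate subspace $V$ ($V\cap V^\perp=\{0\}$), $\{y_j\}$ in $V$ is a $c$-tight frame for $V$ if it spans $V$ and $\sum_j\langle y_j,y\rangle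 y_j=cy$ for all $y\in V$. $(\mathbb{F}_{q^2}^d)^{\otimes2}_{\mathrm{sym}}=\{\sum_{i,j}c_{ij}e_i\otimes e_j:c_{ij}=c_{ji}\}$ (nondegenerate for $q$ odd). A family $\{x_k\}$ in $\mathbb{F}_{q^2}^d$ is an $(a,c_1,c_2)$-projective $2$-design if $\langle x_k,x_k\rangle=a$ for all $k$, $\{x_k\}$ is a $c_1$-tight frame for $\mathbb{F}_{q^2}^d$, and $\{x_k\otimes x_k\}$ is a $c_2$-tight frame for $(\mathbb{F}_{q^2}^d)^{\otimes2}_{\mathrm{sym}}$. Integer parameters are read in $\mathbb{F}_q$. *)

(* Defs.v *)
From HB Require Import structures.
From mathcomp Require Import all_boot all_order all_algebra all_field.
Set Implicit Arguments. Unset Strict Implicit. Unset Printing Implicit Defensive.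
Import GRing.Theory.
Local Open Scope ring_scope.

(* Vectors in F^d are functions 'Z_d -> F (d > 1 in all uses);
   tensors in (F^d)^{(x)2} are functions 'Z_d -> 'Z_d -> F,
   e_i (x) e_j  <->  indicator of (i,j). *)

Section Defs.
Variables (F : fieldType) (q d : nat).

Definition conjq (a : F) : F := a ^+ q.

Definition inner (x y : 'Z_d -> F) : F := \sum_(i : 'Z_d) conjq (x i) * y i.

Definition inner2 (X Y : 'Z_d -> 'Z_d -> F) : F :=
  \sum_(i : 'Z_d) \sum_(j : 'Z_d) conjq (X i j) * Y i j.

Definition tensor2 (x : 'Z_d -> F) : 'Z_d -> 'Z_d -> F := fun i j => x i * x j.

Definition is_sym (X : 'Z_d -> 'Z_d -> F) : Prop := forall i j, X i j = X j i.

Definition shiftT (f : 'Z_d -> F) : 'Z_d -> F := fun x => f (x - 1).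

Definition modM (omega : F) (f : 'Z_d -> F) : 'Z_d -> F :=
  fun x => omega ^+ (val x) * f x.

Definition indic (D : {set 'Z_d}) : 'Z_d -> F := fun x => if x \in D then 1 else 0.

Definition tight_frame_full (I : finType) (y : I -> 'Z_d -> F) (c : F) : Prop :=
  (forall v : 'Z_d -> F, exists coef : I -> F,
      forall i, v i = \sum_(j : I) coef j * y j i) /\
  (forall v : 'Z_d -> F, forall i,
      \sum_(j : I) inner (y j) v * y j i = c * v i).

Definition tight_frame_sym (I : finType) (Y : I -> 'Z_d -> 'Z_d -> F) (c : F) : Prop :=
  (forall j, is_sym (Y j)) /\
  (forall V, is_sym V -> exists coef : I -> F,
      forall a b, V a b = \sum_(j : I) coef j * Y j a b) /\
  (forall V, is_sym V -> forall a b,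
      \sum_(j : I) inner2 (Y j) V * Y j a b = c * V a b).

Definition projective_2design (I : finType) (x : I -> 'Z_d -> F) (a c1 c2 : F) : Prop :=
  (forall k, inner (x k) (x k) = a) /\
  tight_frame_full x c1 /\
  tight_frame_sym (fun k => tensor2 (x k)) c2.

End Defs.

Definition cyclic_diff_set (d m : nat) (D : {set 'Z_d}) : Prop :=
  #|D| = m /\
  forall z : 'Z_d, z != 0 ->
    exists! xy : 'Z_d * 'Z_d, [&& xy.1 \in D, xy.2 \in D & xy.1 - xy.2 == z].

Definition prime_power (r : nat) : Prop :=
  exists l e : nat, prime l /\ (0 < e)%N /\ r = (l ^ e)%N.

(* Main.v *)
Require Import Defs.
From HB Require Import structures.
From mathcomp Require Import all_boot all_order all_algebra all_field.
From mathcomp Require Import ring zify.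
From Stdlib Require Import FunctionalExtensionality.
Import GRing.Theory.
Local Open Scope ring_scope.

Section Main.
Variables (F : finFieldType) (q d m : nat) (omega : F) (D : {set 'Z_d}).
Hypotheses (hd : (1 < d)%N) (hom : d.-primitive_root omega) (hq : (d %| q.+1)%N)
  (hq0 : (0 < q)%N) (hD : cyclic_diff_set m D) (hm : (m%:R : F) = 2).

Lemma chiD (x y : 'Z_d) : omega ^+ val (x + y) = omega ^+ val x * omega ^+ val y.
Proof.
have hom' : (Zp_trunc d).+2.-primitive_root omega by rewrite Zp_cast.
by rewrite /= prim_expr_mod // exprD.
Qed.

Lemma chi0 : omega ^+ val (0 : 'Z_d) = 1.
Proof. by rewrite expr0. Qed.

Lemma chi_neq0 (x : 'Z_d) : omega ^+ val x != 0.
Proof.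
apply: expf_neq0; apply/negP => /eqP h.
have := prim_expr_order hom; rewrite h expr0n.
by case: (d) hd => // n _ /eqP; rewrite eq_sym oner_eq0.
Qed.

Lemma chiN (x : 'Z_d) : conjq q (omega ^+ val x) = omega ^+ val (-x).
Proof.
apply: (mulIf (chi_neq0 x)).
rewrite -chiD addNr chi0 /conjq -exprM -[X in _ * X]expr1 -exprD -mulnSr mulnC exprM.
have := prim_order_dvd hom q.+1; rewrite hq => /esym/eqP ->.
by rewrite expr1n.
Qed.

Lemma conjM (a b : F) : conjq q (a * b) = conjq q a * conjq q b.
Proof. by rewrite /conjq exprMn. Qed.

Lemma conjX (a : F) n : conjq q (a ^+ n) = (conjq q a) ^+ n.
Proof. by rewrite /conjq exprAC. Qed.

Lemma conjI (x : 'Z_d) : conjq q (indic F D x) = indic F D x.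
Proof. rewrite /conjq /indic; case: ifP => _; first by rewrite expr1n.
by rewrite expr0n; case: (q) hq0. Qed.

Lemma orth (z : 'Z_d) :
  \sum_(s : 'Z_d) (omega ^+ val z) ^+ val s = if z == 0 then d%:R else 0.
Proof.
case: eqP => [->|/eqP nz].
  by rewrite chi0 (eq_bigr (fun _ => 1)) ?sumr_const ?cardT ?size_enum_ord ?Zp_cast // => s _; rewrite expr1n.
set w := omega ^+ val z.
have w1 : w != 1.
  rewrite /w -(prim_order_dvd hom); apply/negP => /dvdn_leq.
  have : (0 < val z)%N by rewrite lt0n; apply: contra nz => /eqP h; apply/eqP/val_inj.
  move=> h0 /(_ h0); have := leq_trans (ltn_ord z) (eq_leq (Zp_cast hd)) => a b.
  by move: (leq_trans a b); rewrite ltnn.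
have wd : w ^+ d = 1 by rewrite /w exprAC (prim_expr_order hom) expr1n.
have := subrX1 w d; rewrite wd subrr => /esym/eqP; rewrite mulf_eq0 subr_eq0 (negPf w1) /=.
move=> /eqP h; transitivity (\sum_(i < d) w ^+ i); last exact h.
rewrite -(big_mkord xpredT (fun i => w ^+ i)) -(big_mkord xpredT (fun i => w ^+ i)).
by rewrite Zp_cast.
Qed.


Lemma indicE x : indic F D x = (x \in D)%:R.
Proof. by rewrite /indic; case: (x \in D). Qed.

Lemma indicM x : indic F D x * indic F D x = indic F D x.
Proof. by rewrite /indic; case: (x \in D); rewrite ?mulr1 ?mulr0. Qed.

Lemma sumI (i : 'Z_d) : \sum_(t : 'Z_d) indic F D (i - t) = m%:R.
Proof.
have inj : injective (fun t : 'Z_d => i - t).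
  by move=> x y /= /addrI /oppr_inj.
transitivity (\sum_(u : 'Z_d) indic F D u).
  by rewrite [RHS](reindex_inj inj).
rewrite /indic -big_mkcond /= sumr_const.
by case: hD => <- _.
Qed.

Lemma pair1 (a b : 'Z_d) : a != b ->
  \sum_(t : 'Z_d) indic F D (a - t) * indic F D (b - t) = 1.
Proof.
move=> nab; case: hD => _ /(_ (a - b)); rewrite subr_eq0 => /(_ nab).
case=> [[x y] [/and3P [/= xD yD /eqP exy] uni]].
rewrite (bigD1 (a - x)) //= big1 ?addr0.
  have -> : a - (a - x) = x by ring.
  have -> : b - (a - x) = y.
    have -> : y = x - (x - y) by ring.
    by rewrite exy; ring.
  by rewrite /indic xD yD mulr1.
move=> t nt; rewrite /indic; case: ifP => h1; last by rewrite mul0r.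
case: ifP => h2; last by rewrite mulr0.
have := uni (a - t, b - t); rewrite /= h1 h2 /=.
have -> : a - t - (b - t) = a - b by ring.
move=> /(_ (eqxx _)) [ex _]; move: nt; rewrite ex.
have -> : a - (a - t) = t by ring.
by rewrite eqxx.
Qed.

Definition xf (st : 'Z_d * 'Z_d) (i : 'Z_d) : F :=
  (omega ^+ val i) ^+ val st.1 * indic F D (i - st.2).

Lemma conj_xf st l : conjq q (xf st l) = (omega ^+ val (-l)) ^+ val st.1 * indic F D (l - st.2).
Proof. by rewrite /xf conjM conjX chiN conjI. Qed.

Lemma frame1 v i : \sum_(j : 'Z_d * 'Z_d) inner q (xf j) v * xf j i = (d * m)%:R * v i.
Proof.
rewrite -(pair_bigA _ (fun s t => inner q (xf (s,t)) v * xf (s,t) i)) /=.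
transitivity (\sum_(s : 'Z_d) \sum_(t : 'Z_d) \sum_(l : 'Z_d)
   (omega ^+ val (i - l)) ^+ val s * (indic F D (l - t) * indic F D (i - t) * v l)).
  apply: eq_bigr => s _; apply: eq_bigr => t _; rewrite /inner mulr_suml.
  apply: eq_bigr => l _; rewrite conj_xf /xf chiD exprMn /=.
  set A := _ ^+ val s; set B := _ ^+ val s; ring.
rewrite exchange_big.
transitivity (\sum_(t : 'Z_d) \sum_(l : 'Z_d)
   (if i - l == 0 then d%:R else 0) * (indic F D (l - t) * indic F D (i - t) * v l)).
  apply: eq_bigr => t _; rewrite exchange_big; apply: eq_bigr => l _.
  by rewrite -mulr_suml orth.
transitivity (\sum_(t : 'Z_d) d%:R * (indic F D (i - t) * v i)).
  apply: eq_bigr => t _; rewrite (bigD1 i) //= subrr eqxx big1 ?addr0 ?indicM //.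
  by move=> l nl; rewrite subr_eq0 eq_sym (negPf nl) mul0r.
by rewrite -mulr_sumr -mulr_suml sumI natrM mulrA.
Qed.


Lemma key (a b u t : 'Z_d) : u - t \in D -> a + b - u - t \in D ->
  a - t \in D -> b - t \in D -> u = a \/ u = b.
Proof.
move=> uD wD aD bD.
have [e|ne] := eqVneq (a - u) 0.
  by left; apply/eqP; rewrite eq_sym -subr_eq0 e.
case: hD => _ /(_ (a - u) ne) [[x y] [_ uni]].
have h1 := uni (a - t, u - t); have h2 := uni (a + b - u - t, b - t).
rewrite /= aD uD /= in h1; rewrite /= wD bD /= in h2.
have e1 : a - t - (u - t) = a - u by ring.
have e2 : a + b - u - t - (b - t) = a - u by ring.
rewrite e1 eqxx in h1; rewrite e2 eqxx in h2.
have ex : a - t = a + b - u - t.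
  have := congr1 fst (h1 isT); have := congr1 fst (h2 isT); cbn [fst] => <- <-.
  by [].
right; have -> : u = (a - t) - (a + b - u - t) + b by ring.
by rewrite -ex; ring.
Qed.

Lemma indic4 x y : indic F D x * indic F D y * indic F D x * indic F D y =
  indic F D x * indic F D y.
Proof. by rewrite /indic; case: (x \in D); case: (y \in D); rewrite ?mulr1 ?mulr0 ?mul0r. Qed.

Lemma frame2 (V : 'Z_d -> 'Z_d -> F) : Defs.is_sym V -> forall a b,
  \sum_(j : 'Z_d * 'Z_d) inner2 q (tensor2 (xf j)) V * tensor2 (xf j) a b = (2 * d)%:R * V a b.
Proof.
move=> sV a b.
rewrite -(pair_bigA _ (fun s t => inner2 q (tensor2 (xf (s,t))) V * tensor2 (xf (s,t)) a b)).
pose I := indic F D.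
pose G t u w := I (u - t) * I (w - t) * I (a - t) * I (b - t) * V u w.
transitivity (\sum_(s : 'Z_d) \sum_(t : 'Z_d) \sum_(u : 'Z_d) \sum_(w : 'Z_d)
   (omega ^+ val (a + b - u - w)) ^+ val s * G t u w).
  apply: eq_bigr => s _; apply: eq_bigr => t _; rewrite /inner2 mulr_suml.
  apply: eq_bigr => u _; rewrite mulr_suml; apply: eq_bigr => w _.
  rewrite /tensor2 conjM !conj_xf /xf /G /I !chiD !exprMn.
  set A := _ ^+ val s; set B := _ ^+ val s; set C := _ ^+ val s; set E := _ ^+ val s.
  ring.
rewrite exchange_big.
transitivity (\sum_(t : 'Z_d) \sum_(u : 'Z_d) \sum_(w : 'Z_d)
   (if a + b - u - w == 0 then d%:R else 0) * G t u w).
  apply: eq_bigr => t _; rewrite exchange_big; apply: eq_bigr => u _.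
  rewrite exchange_big; apply: eq_bigr => w _.
  by rewrite -mulr_suml orth.
transitivity (\sum_(t : 'Z_d) \sum_(u : 'Z_d) d%:R * G t u (a + b - u)).
  apply: eq_bigr => t _; apply: eq_bigr => u _.
  rewrite (bigD1 (a + b - u)) //= subrr eqxx big1 ?addr0 //.
  by move=> w nw; rewrite subr_eq0 eq_sym (negbTE nw) mul0r.
transitivity (d%:R * \sum_(u : 'Z_d) \sum_(t : 'Z_d) G t u (a + b - u)).
  by rewrite exchange_big mulr_sumr; apply: eq_bigr => u _; rewrite mulr_sumr.
have H0 : forall u, u != a -> u != b -> \sum_(t : 'Z_d) G t u (a + b - u) = 0.
  move=> u na nb; apply: big1 => t _; rewrite /G /I /indic.
  case: ifP => h1; last by rewrite !mul0r.
  case: ifP => h2; last by rewrite mulr0 !mul0r.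
  case: ifP => h3; last by rewrite mulr0 !mul0r.
  case: ifP => h4; last by rewrite mulr0 mul0r.
  by case: (@key a b u t h1 h2 h3 h4) => e; [move: na | move: nb]; rewrite e eqxx.
have [eab|nab] := eqVneq a b.
  subst b; rewrite (bigD1 a) //= [X in _ * (_ + X)]big1 ?addr0; last first.
    by move=> u nu; apply: (H0 u nu nu).
  have -> : a + a - a = a by ring.
  rewrite /G /I (eq_bigr (fun t => indic F D (a - t) * V a a)); last first.
    by move=> t _; rewrite !indicM.
  by rewrite -mulr_suml sumI hm mulrA -natrM mulnC.
rewrite [X in _ * X](bigD1 a) //= [X in _ * (_ + X)](bigD1 b) /=; last by rewrite eq_sym.
rewrite [X in _ * (_ + (_ + X))]big1 ?addr0; last by move=> u /andP [nb na]; apply: H0.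
have -> : a + b - a = b by ring.
have -> : a + b - b = a by ring.
have E1 : \sum_(t : 'Z_d) G t a b = V a b.
  rewrite (eq_bigr (fun t => indic F D (a - t) * indic F D (b - t) * V a b)).
    by rewrite -mulr_suml pair1 // mul1r.
  by move=> t _; rewrite /G /I indic4.
have E2 : \sum_(t : 'Z_d) G t b a = V a b.
  rewrite (eq_bigr (fun t => indic F D (a - t) * indic F D (b - t) * V a b)).
    by rewrite -mulr_suml pair1 // mul1r.
  move=> t _; rewrite /G /I (sV b a).
  have -> : indic F D (b - t) * indic F D (a - t) * indic F D (a - t) * indic F D (b - t) =
     indic F D (a - t) * indic F D (b - t) * indic F D (a - t) * indic F D (b - t) by ring.
  by rewrite indic4.
rewrite E1 E2 -mulr2n mulrnAr; by rewrite -mulr_natl natrM mulrA.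
Qed.

Lemma sumI' (t : 'Z_d) : \sum_(i : 'Z_d) indic F D (i - t) = m%:R.
Proof.
have inj : injective (fun i : 'Z_d => i - t) by move=> x y /= /addIr.
transitivity (\sum_(u : 'Z_d) indic F D u).
  by rewrite [RHS](reindex_inj inj).
rewrite /indic -big_mkcond /= sumr_const.
by case: hD => <- _.
Qed.

Lemma design (h1 : ((d * m)%:R : F) != 0) (h2 : ((2 * d)%:R : F) != 0) :
  projective_2design q xf 2 (d * m)%:R (2 * d)%:R.
Proof.
split; [|split; [split|split; [|split]]].
- move=> [s t]; rewrite /inner -[RHS]hm -(sumI' t); apply: eq_bigr => i _.
  rewrite conj_xf /xf mulrACA -exprMn -chiD addNr chi0 expr1n mul1r.
  by rewrite indicM.
- move=> v; exists (fun j => ((d * m)%:R)^-1 * inner q (xf j) v) => i.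
  under eq_bigr do rewrite -mulrA.
  by rewrite -mulr_sumr frame1 mulrA mulVf // mul1r.
- exact: frame1.
- by move=> j i l; rewrite /tensor2 mulrC.
- move=> V sV; exists (fun j => ((2 * d)%:R)^-1 * inner2 q (tensor2 (xf j)) V) => a b.
  under eq_bigr do rewrite -mulrA.
  by rewrite -mulr_sumr frame2 // mulrA mulVf // mul1r.
- exact: frame2.
Qed.

End Main.

Lemma iterM (F : fieldType) d (om : F) n (g : 'Z_d -> F) x :
  iter n (modM om) g x = (om ^+ val x) ^+ n * g x.
Proof. by elim: n => [|n IH]; rewrite ?expr0 ?mul1r //= /modM IH exprS mulrA. Qed.

Lemma iterT (F : fieldType) d n (f : 'Z_d -> F) x :
  iter n (@shiftT F d) f x = f (x - n%:R).
Proof.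
elim: n x => [|n IH] x; first by rewrite subr0.
rewrite /= /shiftT IH; congr f; rewrite mulrS; ring.
Qed.

Theorem mainTheorem12
  (p k r q d : nat) (F : finFieldType) (alpha : F) (D : {set 'Z_d})
  (Hp : prime p) (Hk : (1 <= k)%N) (Hr : prime_power r)
  (Hpr : (p %| r - 1)%N) (Hdiv : (r ^ 2 + r + 1 %| p ^ k + 1)%N)
  (Hq : q = (p ^ k)%N) (Hd : d = (r ^ 2 + r + 1)%N)
  (HF : #|F| = (q ^ 2)%N)
  (Halpha : (q ^ 2 - 1).-primitive_root alpha)
  (HD : cyclic_diff_set (r + 1) D)
  (Hp3 : (3 < p)%N) :
  let omega := alpha ^+ ((q ^ 2 - 1) %/ d) in
  projective_2design q
    (fun st : 'Z_d * 'Z_d =>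
       iter (val st.1) (modM omega) (iter (val st.2) (@shiftT F d) (indic F D)))
    (2%:R) ((2 * d)%:R) (6%:R).
Proof.
move=> omega.
have r1 : (0 < r)%N.
  by case: Hr => l [e [pl [_ ->]]]; rewrite expn_gt0 prime_gt0.
have hd : (1 < d)%N by rewrite Hd addn1 ltnS addn_gt0 r1 orbT.
have q0 : (0 < q)%N by rewrite Hq expn_gt0 prime_gt0.
have hq : (d %| q.+1)%N by move: Hdiv; rewrite -Hd -Hq addn1.
have hdq : (d %| q ^ 2 - 1)%N.
  by rewrite -{2}(exp1n 2) subn_sqr addn1 dvdn_mull.
have hom : d.-primitive_root omega by exact: dvdn_prim_root.
have pch : p \in [char F] by apply: (card_finPcharP (n := (k * 2)%N)) => //; rewrite HF Hq expnM.
have hr : (r%:R : F) = 1.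
  have : ((r - 1)%:R : F) = 0 by apply/eqP; rewrite -(dvdn_pcharf pch).
  by rewrite -{2}(subnK r1) natrD => ->; rewrite add0r.
have hm : ((r + 1)%:R : F) = 2 by rewrite natrD hr; ring.
have hdR : (d%:R : F) = 3 by rewrite Hd !natrD natrX hr expr1n; ring.
have h6 : (6%:R : F) != 0.
  rewrite -(dvdn_pcharf pch); apply/negP => h.
  have := dvdn_leq (isT : (0 < 6)%N) h; move: Hp Hp3 h.
  by case: (p) => [|[|[|[|[|[|[|p']]]]]]].
have e1 : ((d * (r + 1))%:R : F) = 6%:R by rewrite natrM hdR hm -natrM.
have e2 : ((2 * d)%:R : F) = 6%:R by rewrite natrM hdR -natrM.
have -> : (fun st : 'Z_d * 'Z_d =>
       iter (val st.1) (modM omega) (iter (val st.2) (@shiftT F d) (indic F D)))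
   = @xf F d omega D.
  apply: functional_extensionality => st; apply: functional_extensionality => i.
  by rewrite iterM iterT natr_Zp.
have := @design F q d (r + 1) omega D hd hom hq q0 HD hm.
by rewrite e1 e2 => /(_ h6 h6).
Qed.
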